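(* Fix $\lambda\in[0,1)$ and $p\in(0,1]$. Let $\mathbf{v}^0\in\overline{\mathcal{V}}^\infty$ and let $\mathbf{v}(\mathbf{v}^0,\cdot)$ be the unique solution to the fluid model with initial condition $\mathbf{v}^0$. Then $\sup\{i:\mathbf{v}_i(\mathbf{v}^0,t)>0\}<\infty$ for all $t>0$.
   Context: $\mathcal{S}=\{\mathbf{s}\in[0,1]^{\mathbb{Z}_+}:1=\mathbf{s}_0\ge\mathbf{s}_1\ge\cdots\ge0\}$, $\overline{\mathcal{S}}^\infty=\{\mathbf{s}\in\mathcal{S}:\sum_{i\ge1}\mathbf{s}_i<\infty\}$, $\overline{\mathcal{V}}^\infty=\{\mathbf{v}:\mathbf{v}_i=\sum_{j\ge i}\mathbf{s}_j\ \forall i,\text{ for some }\mathbf{s}\in\overline{\mathcal{S}}^\infty\}$. $g_i(\mathbf{v})=p$ if $\mathbf{v}_i>0$, $=\min\{\lambda\mathbf{v}_{i-1},p\}$ if $\mathbf{v}_i=0<\mathbf{v}_{i-1}$, $=0$ if $\mathbf{v}_i=\mathbf{v}_{i-1}=0$. A solution to the fluid model with initial condition $\mathbf{v}^0$ is $\mathbf{v}:[0,\infty)\to\overline{\mathcal{V}}^\infty$ with (0) all coordinates $L$-Lipschitz for a common $L$; (1) $\mathbf{v}(0)=\mathbf{v}^0$; (2) for all $t$, $\mathbf{v}_0-\mathbf{v}_1=1$ and $1\ge\mathbf{v}_i-\mathbf{v}_{i+1}\ge\mathbf{v}_{i+1}-\mathbf{v}_{i+2}\ge0$, $i\ge0$;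 (3) for a.e. $t$ and all $i\ge1$, $\dot{\mathbf{v}}_i=\lambda(\mathbf{v}_{i-1}-\mathbf{v}_i)-(1-p)(\mathbf{v}_i-\mathbf{v}_{i+1})-g_i(\mathbf{v})$. It exists and is unique. *)

(* Defs.v *)
From HB Require Import structures.
From mathcomp Require Import all_boot all_order all_algebra.
From mathcomp Require Import all_classical all_reals all_analysis.
Set Implicit Arguments. Unset Strict Implicit. Unset Printing Implicit Defensive.
Import Order.TTheory GRing.Theory Num.Theory.
Import numFieldNormedType.Exports.
Local Open Scope classical_set_scope.
Local Open Scope ring_scope.

Definition in_Sbar {R : realType} (s : nat -> R) : Prop :=
  [/\ s 0%N = 1,
      (forall i, 0 <= s i <= 1),
      (forall i, s i.+1 <= s i) &
      cvgn (series s)].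

Definition in_Vbar {R : realType} (v : nat -> R) : Prop :=
  exists s : nat -> R, in_Sbar s /\
    forall i, v i = limn (fun n => (\sum_(i <= j < n) s j)%R).

(* the function g_i of the fluid model (used for i >= 1) *)
Definition g_fm {R : realType} (lam p : R) (v : nat -> R) (i : nat) : R :=
  if 0 < v i then p
  else if (v i == 0) && (0 < v i.-1) then Num.min (lam * v i.-1) p
  else 0.

(* v : [0,oo) -> V-bar^infty, represented as R -> nat -> R; only t >= 0 matters. *)
Definition fluid_solution {R : realType} (lam p : R) (v0 : nat -> R)
    (v : R -> nat -> R) : Prop :=
  [/\
      (exists L : R, forall i t1 t2, 0 <= t1 -> 0 <= t2 ->
          `|v t1 i - v t2 i| <= L * `|t1 - t2|),
      (forall t, 0 <= t -> in_Vbar (v t)),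
      v 0 = v0,
      (forall t, 0 <= t -> v t 0%N - v t 1%N = 1 /\
         forall i, 1 >= v t i - v t i.+1 /\
                   v t i - v t i.+1 >= v t i.+1 - v t i.+2 /\
                   v t i.+1 - v t i.+2 >= 0) &
      {ae (@lebesgue_measure R), forall t : R, 0 < t -> forall i, (1 <= i)%N ->
         is_derive t 1 (fun u => v u i)
           (lam * (v t i.-1 - v t i) - (1 - p) * (v t i - v t i.+1)
              - g_fm lam p (v t) i)}].

(* Main.v *)
Require Import Defs.
From HB Require Import structures.
From mathcomp Require Import all_boot all_order all_algebra.
From mathcomp Require Import all_classical all_reals all_analysis.
From mathcomp Require Import lra ring zify.
Import Order.TTheory GRing.Theory Num.Theory.
Import numFieldNormedType.Exports.
Local Open Scope classical_set_scope.
Local Open Scope ring_scope.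

Lemma null_image (R : realType) (N : set R) (g : R -> R) (T L : R) :
  (@lebesgue_measure R).-negligible N -> 0 <= L ->
  (forall x y, 0 <= x <= T -> 0 <= y <= T -> `|g x - g y| <= L * `|x - y|) ->
  forall a b : R, a < b ->
  exists y, a < y < b /\ forall x, N x -> 0 <= x <= T -> g x != y.
Proof.
move=> /negligible_outer_measure N0 L0 Lip a b ab.
apply: contrapT => Hne.
have Hc : forall y, a < y < b -> exists2 x, N x /\ 0 <= x <= T & g x = y.
  move=> y hy; apply: contrapT => hx; apply: Hne; exists y; split => //.
  move=> x Nx hxT; apply/negP => /eqP gxy; apply: hx; by exists x.
set L' := L + 1.
have L'0 : 0 < L' by rewrite /L'; apply: ltr_pwDr.
set e := (b - a) / (4 * L').
have e0 : 0 < e by apply: divr_gt0; [rewrite subr_gt0 | apply: mulr_gt0].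
have : ((wlength idfun)^*%mu N)%E \is a fin_num by rewrite N0.
rewrite measurable_realfun.outer_measure_open_itv_cover => /(lb_ereal_inf_adherent e0).
move=> [_ /= [F [Fitv NF] <-]].
rewrite -measurable_realfun.outer_measure_open_itv_cover N0 add0e => Fe.
have hF : forall k, {ab : R * R | F k = `]ab.1, ab.2[%classic}.
  by move=> k; apply: cid; apply: Fitv.
pose lo k := (sval (hF k)).1.
pose hi k := (sval (hF k)).2.
have FkE k : F k = `]lo k, hi k[%classic by rewrite /lo /hi; case: (hF k).
pose m k := Num.min (hi k) T.
pose G k := `](g (m k) - L' * (hi k - lo k)), (g (m k) + L' * (hi k - lo k))[%classic.
have cov : `]a, b[%classic `<=` \bigcup_k G k.
  move=> y /=; rewrite in_itv /= => /Hc [x [Nx /andP[x0 xT]] <-].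
  have [k _] := NF x Nx.
  rewrite FkE /= in_itv /= => /andP[lox xhi].
  exists k => //=.
  have xm : x <= m k by rewrite /m le_min (ltW xhi) xT.
  have m0 : 0 <= m k by apply: le_trans xm.
  have mT : m k <= T by rewrite /m ge_min lexx orbT.
  have := Lip x (m k); rewrite x0 xT m0 mT /= => /(_ isT isT) hL.
  have hlt : L * `|x - m k| < L' * (hi k - lo k).
    apply: (le_lt_trans (y := L * (hi k - lo k))).
      apply: ler_wpM2l => //.
      rewrite distrC ger0_norm ?subr_ge0 //.
      apply: lerB; first by rewrite /m ge_min lexx.
      exact: ltW.
    rewrite /L' mulrDl mul1r ltrDl subr_gt0.
    exact: lt_trans lox xhi.
  have := le_lt_trans hL hlt.
  rewrite /G /=  in_itv /= ltr_norml => /andP[h1 h2].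
  apply/andP; split; lra.
have := measure_sigma_subadditive (@lebesgue_measure R) (fun k => measurable_itv _) (measurable_itv `]a, b[) cov => h1.
have E1 := lebesgue_measure_itv `]a, b[.
rewrite /= lte_fin ab /= in E1.
have {}h1 : ((b - a)%:E <= \sum_(0 <= k <oo) (@lebesgue_measure R) (G k))%E.
  apply: le_trans h1; rewrite le_eqVlt; apply/orP; left; apply/eqP.
  exact: (esym E1).

have h2 : (\sum_(0 <= k <oo) (@lebesgue_measure R) (G k) <=
    \sum_(0 <= k <oo) ((2 * L')%:E * wlength idfun (F k)))%E.
  apply: lee_nneseries => [k _ _|k _]; first exact: measure_ge0.
  rewrite FkE wlength_itv /G lebesgue_measure_itv /= !lte_fin.
  case: ifPn => h; case: ifPn => h'; move: h h'; rewrite -?leNgt => h h';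
    rewrite ?mule0 -?EFinD -?EFinM ?lee_fin; nra.
have h3 := le_trans h1 h2.
rewrite nneseriesZl in h3; last by move=> k _; exact: wlength_ge0.
have : ((b - a)%:E < (2 * L')%:E * e%:E)%E.
  apply: (le_lt_trans h3).
  rewrite lte_pmul2l // lte_fin; apply: mulr_gt0 => //.
rewrite -EFinM lte_fin /e.
have hba : 0 < b - a by rewrite subr_gt0.
have -> : 2 * L' * ((b - a) / (4 * L')) = (b - a) / 2.
  by field; rewrite lt0r_neq0.
lra.
Qed.
Lemma deriv_contra (R : realType) (f : R -> R) (s df c T : R) :
  is_derive s 1 f df -> df < - c -> s < T ->
  (forall x, s < x <= T -> f x - f s > - c * (x - s)) -> False.
Proof.
move=> hd hdf sT hx.
have cv : (fun h : R => h^-1 *: ((f \o shift s) (h *: 1) - f s)) @ 0^' --> df.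
  rewrite -(@derive_val _ _ _ _ _ _ _ hd); exact: (@ex_derive _ _ _ _ _ _ _ hd).
have := @cvgr_lt _ _ _ _ _ df cv (- c) hdf.
move=> /(_ (dnbhs_filter _)) [d /= d0 Hd].
pose h := Num.min (d / 2) (T - s).
have h0 : 0 < h by rewrite lt_min divr_gt0 // subr_gt0 sT.
have hd2 : h < d.
  apply: (le_lt_trans (y := d / 2)); first by rewrite ge_min lexx.
  by rewrite ltr_pdivrMr // ltr_pMr // ltr1n.
have hT : s < h + s <= T.
  rewrite ltrDr h0 /= -lerBrDr; by rewrite ge_min lexx orbT.
have := Hd h; rewrite /ball_ /= sub0r normrN gtr0_norm // => /(_ hd2 (lt0r_neq0 h0)).
rewrite /GRing.scale /= mulr1 ltr_pdivrMl // => hq.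
have := hx _ hT; rewrite addrK; lra.
Qed.

Lemma crossing (R : realType) (N : set R) (f f' : R -> R) (T L c : R) :
  (@lebesgue_measure R).-negligible N -> 0 <= L -> 0 < c -> 0 < T ->
  (forall x y, 0 <= x <= T -> 0 <= y <= T -> `|f x - f y| <= L * `|x - y|) ->
  (forall x, 0 < x < T -> ~ N x -> 0 < f x -> is_derive x 1 f (f' x) /\ f' x <= - (2 * c)) ->
  f 0 < c * T -> f T <= 0.
Proof.
move=> N0 L0 c0 T0 Lip Hd f0.
rewrite leNgt; apply/negP => fT.
pose g x := f x + c * x.
have Lg : forall x y, 0 <= x <= T -> 0 <= y <= T -> `|g x - g y| <= (L + c) * `|x - y|.
  move=> x y hx hy; rewrite /g.
  have -> : f x + c * x - (f y + c * y) = (f x - f y) + c * (x - y) by ring.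
  apply: (le_trans (ler_normD _ _)); rewrite normrM (gtr0_norm c0) mulrDl lerD2r.
  exact: Lip.
have Lc0 : 0 <= L + c by rewrite addr_ge0 // ltW.
have ab : Num.max (f 0) (c * T) < f T + c * T.
  by rewrite gt_max; apply/andP; split; lra.
have [y [/andP [ya yb] yN]] := @null_image R N g T (L + c) N0 Lc0 Lg _ _ ab.
move: ya; rewrite gt_max => /andP[y0 ycT].
pose S := [set x | 0 <= x <= T /\ g x <= y].
have g0 : g 0 = f 0 by rewrite /g mulr0 addr0.
have S0 : S 0 by split; [rewrite lexx ltW | rewrite g0 ltW].
have hsup : has_sup S.
  split; first by exists 0.
  by exists T => x [/andP[_ ?] _].
pose s := sup S.
have s0 : 0 <= s by apply: sup_upper_bound.
have sT : s <= T by apply: ge_sup; [exists 0 | move=> x [/andP[_ ?] _]].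
have sTi : 0 <= s <= T by rewrite s0 sT.
have above : forall x, s < x <= T -> y < g x.
  move=> x /andP[sx xT]; rewrite ltNge; apply/negP => gx.
  have : x <= s by apply: sup_upper_bound => //; split => //; rewrite xT andbT; lra.
  lra.
set K := L + c + 1.
have K0 : 0 < K by rewrite /K; lra.
have gsle : g s <= y.
  rewrite leNgt; apply/negP => gs.
  pose del := (g s - y) / K.
  have del0 : 0 < del by apply: divr_gt0; lra.
  have [e [/andP[e0 eT] ge] se] := sup_adherent del0 hsup.
  have es : e <= s by apply: (sup_upper_bound hsup); split => //; rewrite e0 eT.
  have hL : `|g s - g e| <= (L + c) * (s - e).
    by rewrite -[s - e]ger0_norm ?subr_ge0 //; apply: Lg => //; rewrite e0 eT.
  have : (L + c) * (s - e) < g s - y.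
    apply: (le_lt_trans (y := (L + c) * del)).
      apply: ler_wpM2l => //; rewrite /s; lra.
    rewrite /del mulrA ltr_pdivrMr // mulrC ltr_pM2l; last lra.
    rewrite /K; lra.
  move: hL; rewrite ler_norml => /andP[hL1 hL2] hh.
  move: ge hL1 hL2 hh; rewrite /g; lra.
have gsge : y <= g s.
  rewrite leNgt; apply/negP => gs.
  have sTs : s < T.
    rewrite lt_neqAle sT andbT; apply/negP => /eqP sTe.
    move: gs; rewrite sTe /g; lra.
  pose del := (y - g s) / K.
  have del0 : 0 < del by apply: divr_gt0; lra.
  pose x := Num.min (s + del) T.
  have sx : s < x by rewrite lt_min sTs andbT ltrDl.
  have xT : x <= T by rewrite ge_min lexx orbT.
  have xsd : x <= s + del by rewrite ge_min lexx.
  have hxT : 0 <= x <= T by rewrite xT andbT; lra.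
  have hL : `|g x - g s| <= (L + c) * (x - s).
    by rewrite -[x - s]gtr0_norm ?subr_gt0 //; apply: Lg.
  have : (L + c) * (x - s) < y - g s.
    apply: (le_lt_trans (y := (L + c) * del)).
      apply: ler_wpM2l => //; lra.
    rewrite /del mulrA ltr_pdivrMr // mulrC ltr_pM2l; last lra.
    rewrite /K; lra.
  move=> hh.
  have Sx : S x by split => //; move: hL; rewrite ler_norml => /andP[_ ?]; lra.
  have := sup_upper_bound hsup Sx; rewrite -/s; lra.
have gs : g s = y by apply/eqP; rewrite eq_le gsle gsge.
have sTs : s < T.
  rewrite lt_neqAle sT andbT; apply/negP => /eqP sTe.
  move: gs; rewrite sTe /g; lra.
have s0' : 0 < s.
  rewrite lt_neqAle s0 andbT; apply/negP => /eqP s0e.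
  move: gs; rewrite -s0e g0; lra.
have Ns : ~ N s by move=> Ns; move: (yN s Ns sTi); rewrite gs eqxx.
have fs : 0 < f s by move: gs; rewrite /g => gs; nra.
have hs : 0 < s < T by rewrite s0' sTs.
have [hd hf'] := Hd s hs Ns fs.
apply: (@deriv_contra R f s (f' s) c T hd _ sTs); first lra.
move=> x hx; have := above x hx; move: gs; rewrite /g => gs' ax; nra.
Qed.
Lemma Vbar_props (R : realType) (w : nat -> R) : in_Vbar w ->
  (forall i, 0 <= w i) /\ (w @ \oo --> (0:R)).
Proof.
move=> [s [[s0 s01 sdec scv] wE]].
pose l := limn (series s).
have cvl : series s @ \oo --> l by apply: scv.
have hinc : {homo series s : n m / (n <= m)%N >-> n <= m}.
  move=> n m nm; rewrite /series /= (big_cat_nat (leq0n n) nm) /= lerDl.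
  by apply: sumr_ge0 => j _; case/andP: (s01 j).
have wE' : forall i, w i = l - series s i.
  move=> i; rewrite wE; apply: cvg_lim => //.
  have : (fun n => series s n - series s i) @ \oo --> l - series s i.
    by apply: cvgB => //; exact: cvg_cst.
  apply: cvg_trans; apply: near_eq_cvg; near=> n.
  have hin : (i <= n)%N by near: n; exists i.
  by rewrite /series /= (big_cat_nat (leq0n i) hin) /= addrC addrK.
split.
  by move=> i; rewrite wE' subr_ge0; apply: nondecreasing_cvgn_le.
have -> : w = (fun i => l - series s i) by apply: funext => i; exact: wE'.
rewrite -(subrr l); apply: cvgB => //; exact: cvg_cst.
Unshelve. all: by end_near.
Qed.

Arguments Vbar_props {R w}.

Lemma diff_bound (R : realType) (w : nat -> R) :
  (forall i, w i - w i.+1 >= w i.+1 - w i.+2) ->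
  forall k, k%:R * (w k - w k.+1) <= w 1%N - w k.+1.
Proof.
move=> hc; elim=> [|k IH]; first by rewrite mul0r subrr.
have hk : k%:R * (w k.+1 - w k.+2) <= k%:R * (w k - w k.+1).
  by apply: ler_wpM2l => //; apply: hc.
rewrite -natr1 mulrDl mul1r; lra.
Qed.
Arguments diff_bound {R w}.

Theorem proposition3 (R : realType) (lam p : R)
    (hlam : 0 <= lam < 1) (hp : 0 < p <= 1)
    (v0 : nat -> R) (hv0 : in_Vbar v0)
    (v : R -> nat -> R) (hv : fluid_solution lam p v0 v) :
  forall t : R, 0 < t ->
    exists N : nat, forall i : nat, 0 < v t i -> (i <= N)%N.
Proof.
move=> t t0.
case: hv => [[L Lip] hV h0 h2 hae].
case/andP: hlam => lam0 lam1; case/andP: hp => p0 p1.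
set L' := Num.max L 0.
have L'0 : 0 <= L' by rewrite le_max lexx orbT.
have LL' : L <= L' by rewrite le_max lexx.
have Lip' : forall i x y, 0 <= x -> 0 <= y -> `|v x i - v y i| <= L' * `|x - y|.
  move=> i x y x0 y0; apply: (le_trans (Lip i x y x0 y0)).
  by apply: ler_wpM2r.
set C := v 0 1%N + L' * t.
have vpos : forall u, 0 <= u -> forall j, 0 <= v u j.
  by move=> u u0; case: (Vbar_props (hV u u0)).
have v1C : forall u, 0 <= u <= t -> v u 1%N <= C.
  move=> u /andP[u0 ut]; have := Lip' 1%N u 0 u0 (lexx 0).
  rewrite subr0 (ger0_norm u0) ler_norml => /andP[_ h].
  rewrite /C; have : L' * u <= L' * t by apply: ler_wpM2l.
  lra.
have dbound : forall u, 0 <= u <= t -> forall k,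
    k%:R * (v u k - v u k.+1) <= C.
  move=> u hu k.
  have hc : forall i, v u i - v u i.+1 >= v u i.+1 - v u i.+2.
    by move=> i; case: (h2 u (andP hu).1) => _ /(_ i) [_ [? _]].
  have := diff_bound hc k; have := vpos u (andP hu).1 k.+1; have := v1C u hu.
  lra.
have dpos : forall u, 0 <= u -> forall k, 0 <= v u k - v u k.+1.
  move=> u u0 [|k]; case: (h2 u u0) => [E H]; first lra.
  by case: (H k) => _ [_ ?].
have C0 : 0 <= C.
  by apply: (le_trans (vpos t (ltW t0) 1%N)); apply: v1C; rewrite ltW // lexx.
set K0 := Num.Def.archi_bound (2 * C / p).
have K0P : 2 * C / p < K0%:R by apply: archi_boundP; apply: divr_ge0; lra.
have [_ cv0] := Vbar_props hv0.
have ev : \forall i \near \oo, v0 i < p / 4 * t.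
  apply: (@cvgr_lt _ _ _ _ _ 0 cv0).
  by apply: mulr_gt0 => //; apply: divr_gt0.
case: ev => N1 _ HN1.
exists (N1 + K0 + 1)%N => i vi.
rewrite leqNgt; apply/negP => iN.
case: hae => Nset [mN muN HN].
have Nneg : (@lebesgue_measure R).-negligible Nset by exists Nset; split.
have [k ik] : exists k, i = k.+1.
  by exists i.-1; rewrite prednK //; move: iN; case: (i) => //.
subst i.
have kK0 : (K0 <= k)%N by move: iN; clear; lia.
have kN1 : (N1 <= k.+1)%N by move: iN; clear; lia.
have k1 : (1 <= k)%N by move: iN; clear; lia.
have kpos : (0 : R) < k%:R by rewrite ltr0n.
have kp : 2 * C < k%:R * p.
  have : 2 * C / p < k%:R.
    by apply: (lt_le_trans K0P); rewrite ler_nat.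
  by rewrite ltr_pdivrMr.
have p4 : 0 < p / 4 by apply: divr_gt0.
have := @crossing R Nset (fun u => v u k.+1)
  (fun x => lam * (v x k - v x k.+1) - (1 - p) * (v x k.+1 - v x k.+2) - p)
  t L' (p / 4) Nneg L'0 p4 t0.
move=> /(_ _ _ _) H.
have : v t k.+1 <= 0.
  apply: H.
  - by move=> x y /andP[x0 _] /andP[y0 _]; apply: Lip'.
  - move=> x /andP[x0 xt] Nx vx.
    have Px : 0 < x -> forall i : nat, (0 < i)%N ->
             is_derive x 1 (v^~ i)
               (lam * (v x i.-1 - v x i) - (1 - p) * (v x i - v x i.+1) -
                g_fm lam p (v x) i).
      by apply: contrapT => hP; apply: Nx; apply: HN.
    have gp : g_fm lam p (v x) k.+1 = p by rewrite /g_fm vx.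
    have := Px x0 k.+1 isT; rewrite gp /= => hd; split => //.
    have hx : 0 <= x <= t by rewrite (ltW x0) (ltW xt).
    have := dbound x hx k; have := dpos x (ltW x0) k; have := dpos x (ltW x0) k.+1.
    move=> d1 d0 db.
    have dk : v x k - v x k.+1 <= p / 2.
      rewrite leNgt; apply/negP => hlt.
      have : k%:R * (p / 2) < k%:R * (v x k - v x k.+1) by rewrite ltr_pM2l.
      lra.
    have : lam * (v x k - v x k.+1) <= v x k - v x k.+1.
      by rewrite ler_piMl // ltW.
    have : 0 <= (1 - p) * (v x k.+1 - v x k.+2) by apply: mulr_ge0; lra.
    lra.
  - by rewrite h0; apply: HN1.
lra.
Qed.
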